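(* Let $k\ge 1$ and let $D_k=3k^2+3k+1$. Let $d=D_kq+\beta$ with integers $q\ge 1$ and $0\le \beta\le D_k-1$. Then \[ \gamma_k(T_d)\le \begin{cases} \dfrac{D_kq^2+(6k+3)q+2}{2}, & \text{if } \beta=0,\\[6pt] \dfrac{D_k(q+1)^2+(6k+3)(q+1)+2}{2}, & \text{if } \beta>0. \end{cases} \]
   Context: Let $\alpha_1=(1,0)$ and $\alpha_2=(-\tfrac12,\tfrac{\sqrt3}{2})$. The triangular lattice $T_\infty$ is the infinite graph with vertex set $\{a\alpha_1+b\alpha_2 : a,b\in\mathbb Z\}$, two vertices being adjacent iff their Euclidean distance is $1$. For an integer $d\ge 0$, the triangular matchstick graph $T_d$ is the subgraph of $T_\infty$ induced by the vertices $a\alpha_1+b\alpha_2$ with $0\le b\le a\le d$. For a connected graph $G$, a set $D\subseteq V(G)$ is a distance-$k$ dominating set if every vertex of $G$ is at (graph) distance at most $k$ from some vertex of $D$; $\gamma_k(G)$ is the minimum size of such a set. *)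

(* Defs.v *)
From mathcomp Require Import all_boot.
Set Implicit Arguments. Unset Strict Implicit. Unset Printing Implicit Defensive.

(* Vertices of T_d: pairs (a,b) with 0 <= b <= a <= d, standing for a*alpha1 + b*alpha2. *)
Definition vtx (d : nat) := {p : 'I_d.+1 * 'I_d.+1 | (p.2 <= p.1)%N}.

(* Adjacency in the triangular lattice: unit distance iff the coordinate
   difference is +-(1,0), +-(0,1) or +-(1,1). T_d is the induced subgraph. *)
Definition tadj (d : nat) : rel (vtx d) := fun x y =>
  let a := nat_of_ord (val x).1 in let b := nat_of_ord (val x).2 in
  let c := nat_of_ord (val y).1 in let e := nat_of_ord (val y).2 in
  [|| (c == a.+1) && (e == b), (a == c.+1) && (b == e),
      (c == a) && (e == b.+1), (a == c) && (b == e.+1),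
      (c == a.+1) && (e == b.+1) | (a == c.+1) && (b == e.+1)].

Definition within (d k : nat) (x y : vtx d) : bool :=
  [exists n : 'I_k.+1, [exists t : n.-tuple (vtx d),
     path (@tadj d) x t && (last x t == y)]].

Definition dominating (d k : nat) (D : {set vtx d}) : bool :=
  [forall v : vtx d, [exists u in D, within k u v]].

(* gamma_k(T_d): minimum size of a distance-k dominating set
   (the full vertex set is always one, so the arg min is well defined). *)
Definition gamma (k d : nat) : nat :=
  #|[arg min_(D < [set: vtx d] | dominating k D) #|D| ]|.

(* Main.v *)
Require Import Defs.
From Stdlib Require Import ZArith Lia.
From mathcomp Require Import all_boot zify.

Definition A {d} (x : vtx d) : nat := (val x).1.
Definition B {d} (x : vtx d) : nat := (val x).2.

Lemma vtx_bnd {d} (x : vtx d) : B x <= A x <= d.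
Proof. rewrite /A /B; case: x => [[a b]] /= H. by rewrite H -ltnS ltn_ord. Qed.

Lemma vtx_eq {d} (x y : vtx d) : A x = A y -> B x = B y -> x = y.
Proof.
case: x => [[a b] Hx]; case: y => [[c e] Hy]; rewrite /A /B /= => H1 H2.
apply: val_inj => /=. by congr pair; apply: val_inj.
Qed.

Definition v0 d : vtx d := exist _ (ord0, ord0) (leqnn 0).
Definition toV d (a b : nat) : vtx d := insubd (v0 d) (inord a, inord b).

Lemma toV_AB d a b : b <= a -> a <= d -> A (toV d a b) = a /\ B (toV d a b) = b.
Proof.
move=> ba ad.
have ha : a < d.+1 by lia.
have hb : b < d.+1 by lia.
rewrite /toV /A /B insubdK /= ?inordK //; last by rewrite unfold_in /= !inordK.

Qed.

Lemma tadjE {d} (x y : vtx d) : tadj x y =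
  [|| (A y == (A x).+1) && (B y == B x), (A x == (A y).+1) && (B x == B y),
      (A y == A x) && (B y == (B x).+1), (A x == A y) && (B x == (B y).+1),
      (A y == (A x).+1) && (B y == (B x).+1) | (A x == (A y).+1) && (B x == (B y).+1)].
Proof. by []. Qed.

Open Scope Z_scope.
Definition hnab (da db : Z) : Z := Z.max (Z.abs da) (Z.max (Z.abs db) (Z.abs (da - db))).
Definition hd {d} (x y : vtx d) : Z :=
  hnab (Z.of_nat (A y) - Z.of_nat (A x)) (Z.of_nat (B y) - Z.of_nat (B x)).
Close Scope Z_scope.

Lemma step {d} (x y : vtx d) : x <> y -> exists x', tadj x x' /\ (hd x' y = hd x y - 1)%Z.
Proof.
move=> nxy.
have [bx ax] := andP (vtx_bnd x). have [byy ay] := andP (vtx_bnd y).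
have Hne : A x <> A y \/ B x <> B y.
  case: (eqVneq (A x) (A y)) => h1; last by left; apply/eqP.
  case: (eqVneq (B x) (B y)) => h2; last by right; apply/eqP.
  by case: nxy; apply: vtx_eq.
rewrite /hd /hnab.
have [lt1|ge1] := ltnP (A x) (A y).
  have [lt2|ge2] := ltnP (B x) (B y).
    have [h1 h2] := toV_AB d (A x).+1 (B x).+1 ltac:(lia) ltac:(lia).
    exists (toV d (A x).+1 (B x).+1); rewrite tadjE h1 h2; split; lia.
  have [h1 h2] := toV_AB d (A x).+1 (B x) ltac:(lia) ltac:(lia).
  exists (toV d (A x).+1 (B x)); rewrite tadjE h1 h2; split; lia.
have [lt3|eq3] := ltnP (A y) (A x).
  have [lt2|ge2] := ltnP (B y) (B x).
    have [h1 h2] := toV_AB d (A x).-1 (B x).-1 ltac:(lia) ltac:(lia).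
    exists (toV d (A x).-1 (B x).-1); rewrite tadjE h1 h2; split; lia.
  have [h1 h2] := toV_AB d (A x).-1 (B x) ltac:(lia) ltac:(lia).
  exists (toV d (A x).-1 (B x)); rewrite tadjE h1 h2; split; lia.
have [lt2|ge2] := ltnP (B x) (B y).
  have [h1 h2] := toV_AB d (A x) (B x).+1 ltac:(lia) ltac:(lia).
  exists (toV d (A x) (B x).+1); rewrite tadjE h1 h2; split; lia.
have [h1 h2] := toV_AB d (A x) (B x).-1 ltac:(lia) ltac:(lia).
exists (toV d (A x) (B x).-1); rewrite tadjE h1 h2; split; lia.
Qed.

Lemma walk d n : forall x y : vtx d, (hd x y <= Z.of_nat n)%Z ->
  exists t, size t <= n /\ path (@tadj d) x t /\ last x t = y.
Proof.
elim: n => [|n IH] x y H.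
  exists [::]; split => //; split => //=.
  have [bx ax] := andP (vtx_bnd x). have [byy ay] := andP (vtx_bnd y).
  move: H; rewrite /hd /hnab => H.
  apply: vtx_eq; lia.
case: (eqVneq x y) => [->|nxy]; first by exists [::].
have [x' [ha hd']] := step x y (elimN eqP nxy).
have [t [h1 [h2 h3]]] := IH x' y ltac:(lia).
exists (x' :: t); split => /=; first by lia.
by rewrite ha h2 h3.
Qed.

Lemma within_of d k (x y : vtx d) : (hd x y <= Z.of_nat k)%Z -> within k x y.
Proof.
move=> H; have [t [hs [hp hl]]] := walk _ _ _ _ H.
apply/existsP; exists (Ordinal (n:=k.+1) (m:=size t) ltac:(lia)).
apply/existsP; exists (in_tuple t) => /=.
by rewrite hp hl eqxx.
Qed.

Open Scope Z_scope.
Lemma lip1 a b a' b' : hnab (a' - a) (Z.max b' 0 - Z.max b 0) <= hnab (a'-a) (b'-b).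
Proof. unfold hnab. lia. Qed.
Lemma lip2 a b a' b' : hnab (Z.max a' b' - Z.max a b) (b' - b) <= hnab (a'-a) (b'-b).
Proof. unfold hnab. lia. Qed.
Lemma lip3a a b a' b' d : hnab (Z.min a' d - Z.min a d) (b' - b) <= hnab (a'-a) (b'-b).
Proof. unfold hnab. lia. Qed.
Lemma lip3b a b a' b' d : hnab (a' - a) (Z.min b' d - Z.min b d) <= hnab (a'-a) (b'-b).
Proof. unfold hnab. lia. Qed.

Definition ra (d : nat) (a b : Z) : Z := Z.min (Z.max a (Z.max b 0)) (Z.of_nat d).
Definition rb (d : nat) (a b : Z) : Z := Z.min (Z.max b 0) (Z.of_nat d).

Lemma r_lip d a b a' b' : hnab (ra d a' b' - ra d a b) (rb d a' b' - rb d a b) <= hnab (a'-a) (b'-b).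
Proof.
rewrite /ra /rb.
set b1 := Z.max b 0; set b1' := Z.max b' 0.
set a1 := Z.max a b1; set a1' := Z.max a' b1'.
eapply Z.le_trans; first apply: lip3a.
eapply Z.le_trans; first apply: lip3b.
eapply Z.le_trans; first apply: lip2.
apply: lip1.
Qed.
Close Scope Z_scope.

Definition rv d (a b : Z) : vtx d := toV d (Z.to_nat (ra d a b)) (Z.to_nat (rb d a b)).

Lemma rv_AB d a b : Z.of_nat (A (rv d a b)) = ra d a b /\ Z.of_nat (B (rv d a b)) = rb d a b.
Proof.
rewrite /rv.
have [h1 h2] := toV_AB d (Z.to_nat (ra d a b)) (Z.to_nat (rb d a b))
  ltac:(rewrite /ra /rb; lia) ltac:(rewrite /ra /rb; lia).
rewrite h1 h2 /ra /rb; lia.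
Qed.

Lemma rv_id d (x : vtx d) : rv d (Z.of_nat (A x)) (Z.of_nat (B x)) = x.
Proof.
have [h1 h2] := rv_AB d (Z.of_nat (A x)) (Z.of_nat (B x)).
have [bx ax] := andP (vtx_bnd x).
move: h1 h2; rewrite /ra /rb => h1 h2.
apply: vtx_eq; lia.
Qed.

Lemma rv_within d k (x : vtx d) (a b : Z) :
  (hnab (Z.of_nat (A x) - a) (Z.of_nat (B x) - b) <= Z.of_nat k)%Z -> within k (rv d a b) x.
Proof.
move=> H; apply: within_of.
rewrite -[X in hd _ X](rv_id _ x) /hd.
have [h1 h2] := rv_AB d a b.
have [h3 h4] := rv_AB d (Z.of_nat (A x)) (Z.of_nat (B x)).
rewrite h1 h2 h3 h4.
eapply Z.le_trans; first apply: r_lip. exact: H.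
Qed.

Local Open Scope Z_scope.
Definition hn (x y : Z) := Z.max (Z.abs x) (Z.max (Z.abs y) (Z.abs (x+y))).
Definition Dz (k : Z) := 3*k*k + 3*k + 1.
Definition inL (k X Y : Z) := exists t, X - (3*k+1)*Y = Dz k * t.

Lemma descent (k x y : Z) : 1 <= k -> k+1 <= hn x y ->
  exists a b, (exists t, a - (3*k+1)*b = Dz k * t) /\ hn (x-a) (y-b) < hn x y.
Proof. unfold hn, Dz. intros Hk H.
destruct (Z_le_gt_dec 0 x); destruct (Z_le_gt_dec 0 y).
- destruct (Z_le_gt_dec x k).
  + exists k, (k+1). split; [exists (-1); ring|]. lia.
  + exists (2*k+1), (-k). split; [exists 1; ring|]. lia.
- destruct (Z_le_gt_dec 0 (x+y)).
  + destruct (Z_le_gt_dec (x+y) 0).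
    * exists (k+1), (-(2*k+1)). split; [exists 2; ring|]. lia.
    * exists (2*k+1), (-k). split; [exists 1; ring|]. lia.
  + destruct (Z_le_gt_dec 1 x).
    * exists (k+1), (-(2*k+1)). split; [exists 2; ring|]. lia.
    * exists (-k), (-(k+1)). split; [exists 1; ring|]. lia.
- destruct (Z_le_gt_dec 0 (x+y)).
  + destruct (Z_le_gt_dec 0 (x - y + k + 1)).
    * exists k, (k+1). split; [exists (-1); ring|]. lia.
    * exists (-(k+1)), (2*k+1). split; [exists (-2); ring|]. lia.
  + destruct (Z_le_gt_dec (k+1) y).
    * exists (-(k+1)), (2*k+1). split; [exists (-2); ring|]. lia.
    * exists (-(2*k+1)), k. split; [exists (-1); ring|]. lia.
- destruct (Z_le_gt_dec y (-1)).
  + exists (-k), (-(k+1)). split; [exists 1; ring|]. lia.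
  + exists (-(2*k+1)), k. split; [exists (-1); ring|]. lia.
Qed.

Lemma cover_aux (k X Y : Z) : 1 <= k -> forall n : nat, forall X' Y', inL k X' Y' ->
  hn (X - X') (Y - Y') <= Z.of_nat n ->
  exists X'' Y'', inL k X'' Y'' /\ hn (X-X'') (Y-Y'') <= k.
Proof.
intros Hk n; induction n as [|n IH]; intros X' Y' HL Hn.
- exists X', Y'; split; auto. unfold hn in *. lia.
- destruct (Z_le_gt_dec (hn (X - X') (Y - Y')) k) as [Hle|Hgt].
  + exists X', Y'; auto.
  + destruct (descent k (X-X') (Y-Y') Hk ltac:(lia)) as [a [b [[t0 Ht0] Hlt]]].
    destruct HL as [t Ht].
    apply (IH (X'+a) (Y'+b)).
    * exists (t + t0). unfold Dz in *. lia.
    * replace (X - (X'+a)) with (X - X' - a) by ring.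
      replace (Y - (Y'+b)) with (Y - Y' - b) by ring. lia.
Qed.

Lemma latcover (k X Y : Z) : 1 <= k ->
  exists X' Y', inL k X' Y' /\ hn (X-X') (Y-Y') <= k.
Proof.
intros Hk.
apply (cover_aux k X Y Hk (Z.to_nat (hn (X - (3*k+1)*Y) (Y - Y))) ((3*k+1)*Y) Y).
- exists 0. ring.
- unfold hn; lia.
Qed.

Local Close Scope Z_scope.

Definition Dn (k : nat) : nat := 3 * k ^ 2 + 3 * k + 1.
Definition rho k s := ((3 * k + 1) * s) %% Dn k.
Definition al k s : nat := Dn k <= rho k s + k.
Definition be k s : nat := Dn k <= s + k.
Definition gg k s : nat := if Dn k + k < rho k s + s then 2 else if k < rho k s + s then 1 else 0.
Definition Nn k Q s : nat := (Q + 1 + al k s + be k s) - gg k s.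

Fixpoint tri (n : nat) : seq (nat * nat) :=
  if n is m.+1 then tri m ++ [seq (i, m - i) | i <- iota 0 m.+1] else [::].

Lemma tri_S n : tri n.+1 = tri n ++ [seq (i, n - i) | i <- iota 0 n.+1].
Proof. by []. Qed.

Lemma tri_mem n u w : u + w < n -> (u, w) \in tri n.
Proof.
elim: n => [|n IH] H; first by [].
rewrite tri_S mem_cat; case: (ltnP (u + w) n) => h; first by rewrite IH.
apply/orP; right.
have -> : w = n - u by lia.
apply: (map_f (fun i => (i, n - i))); rewrite mem_iota; lia.
Qed.

Lemma tri_size n : (size (tri n)).*2 = n * n.+1.
Proof.
elim: n => [|n IH]; first by []. rewrite tri_S size_cat size_map size_iota doubleD IH; lia.
Qed.

Definition fpt k d s (p : nat * nat) : vtx d :=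
  let bZ := (Z.of_nat s + Z.of_nat (Dn k) * (Z.of_nat p.2 - Z.of_nat (be k s)))%Z in
  rv d (Z.of_nat (rho k s) + Z.of_nat (Dn k) * (Z.of_nat p.1 - Z.of_nat (al k s)) + bZ)%Z bZ.

Definition Dseq k Q d : seq (vtx d) :=
  flatten [seq map (fpt k d s) (tri (Nn k Q s)) | s <- iota 0 (Dn k)].

Lemma DnZ k : Z.of_nat (Dn k) = Dz (Z.of_nat k).
Proof. rewrite /Dn /Dz. lia. Qed.

Lemma rho_spec k s : exists t, (3 * k + 1) * s = t * Dn k + rho k s /\ rho k s < Dn k.
Proof.
exists (((3 * k + 1) * s) %/ Dn k); split; first exact: divn_eq.
rewrite /rho ltn_mod /Dn; lia.
Qed.

Local Open Scope Z_scope.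
Lemma hx_aux {X' k s j t t2 r D : Z} : X' - (3*k+1)*(s + D*j) = D*t -> (3*k+1)*s = t2*D + r ->
  X' = r + D * (k*3*j + j + t + t2).
Proof. intros. lia. Qed.
Lemma lo1_aux {D i r k X : Z} : 0 <= r -> r < D -> X = r + D*i -> -k <= X -> 0 <= k < D -> -1 <= i.
Proof. intros. nia. Qed.
Lemma lo0_aux {D i r k X : Z} : 0 <= r -> r + k < D -> X = r + D*i -> -k <= X -> 0 <= k -> 0 <= i.
Proof. intros. nia. Qed.
Lemma hi_aux {D r s i j Q k g : Z} : r + s + D*(i+j) <= D*Q + k -> Q + 1 - g <= i + j -> 0 < D ->
   r + s <= k + D*(g - 1).
Proof. intros. nia. Qed.
Lemma dpos_aux (k : Z) : 0 <= k -> k < 3*k*k+3*k+1.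
Proof. intros. nia. Qed.
Local Close Scope Z_scope.

Lemma dominating_D k Q d : 1 <= k -> 1 <= Q -> d <= Dn k * Q ->
  dominating k [set x in Dseq k Q d].
Proof.
move=> hk hQ hd.
apply/forallP => v.
have [bv av] := andP (vtx_bnd v).
set kZ := Z.of_nat k.
have [X' [Y' [[t Ht] Hc]]] := latcover kZ (Z.of_nat (A v) - Z.of_nat (B v)) (Z.of_nat (B v))
   ltac:(rewrite /kZ; lia).
set D := Z.of_nat (Dn k).
have HD : D = Dz kZ by rewrite /D DnZ.
have Dpos : (kZ < D)%Z by rewrite HD /Dz /kZ; apply: dpos_aux; lia.
have Dgt : (0 < D)%Z by lia.
pose s := Z.to_nat (Y' mod D).
pose j := (Y' / D)%Z.
have Hs : Z.of_nat s = (Y' mod D)%Z by rewrite /s; have := Z.mod_pos_bound Y' D Dgt; lia.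
have HY : Y' = (Z.of_nat s + D * j)%Z by rewrite Hs /j; have := Z.div_mod Y' D ltac:(lia); lia.
have slt : (Z.of_nat s < D)%Z by rewrite Hs; have := Z.mod_pos_bound Y' D Dgt; lia.
have sltn : s < Dn k by move: slt; rewrite /D; lia.
have [t2 [Ht2 rlt]] := rho_spec k s.
set r := rho k s in Ht2 rlt.
have rltZ : (Z.of_nat r < D)%Z by rewrite /D; lia.
pose i := (Z.of_nat k * 3 * j + j + t + Z.of_nat t2)%Z.
have HX : X' = (Z.of_nat r + D * i)%Z.
  have Ht2Z : ((3 * kZ + 1) * Z.of_nat s = Z.of_nat t2 * D + Z.of_nat r)%Z
    by rewrite /kZ /D; lia.
  rewrite HY -HD in Ht.
  exact: (hx_aux Ht Ht2Z).
move: Hc; rewrite /hn => Hc.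
have X'lo : (- kZ <= X')%Z by lia.
have Y'lo : (- kZ <= Y')%Z by lia.
have XYhi : (X' + Y' <= D * Z.of_nat Q + kZ)%Z.
  have : (Z.of_nat d <= D * Z.of_nat Q)%Z by rewrite /D; lia.
  lia.
have hu : (0 <= i + Z.of_nat (al k s))%Z.
  rewrite /al -/r.
  case: (leqP (Dn k) (r + k)) => h /=.
    have := lo1_aux (D:=D) (i:=i) (r:=Z.of_nat r) (k:=kZ) (X:=X') ltac:(lia) rltZ HX X'lo ltac:(lia). lia.
  have := lo0_aux (D:=D) (i:=i) (r:=Z.of_nat r) (k:=kZ) (X:=X') ltac:(lia) ltac:(rewrite /D /kZ; lia) HX X'lo ltac:(lia). lia.
have hw : (0 <= j + Z.of_nat (be k s))%Z.
  rewrite /be.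
  case: (leqP (Dn k) (s + k)) => h /=.
    have := lo1_aux (D:=D) (i:=j) (r:=Z.of_nat s) (k:=kZ) (X:=Y') ltac:(lia) slt HY Y'lo ltac:(lia). lia.
  have := lo0_aux (D:=D) (i:=j) (r:=Z.of_nat s) (k:=kZ) (X:=Y') ltac:(lia) ltac:(rewrite /D /kZ; lia) HY Y'lo ltac:(lia). lia.
pose u := Z.to_nat (i + Z.of_nat (al k s)).
pose w := Z.to_nat (j + Z.of_nat (be k s)).
have huw : u + w < Nn k Q s.
  suff : (i + j + Z.of_nat (gg k s) <= Z.of_nat Q)%Z.
    rewrite /Nn /u /w. move: hu hw. rewrite /gg /al /be.
    rewrite -/r.
    case: (Dn k + k < r + s); case: (k < r + s); case: (Dn k <= r + k); case: (Dn k <= s + k) => /=; lia.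
  have HXY : (Z.of_nat r + Z.of_nat s + D * (i + j) <= D * Z.of_nat Q + kZ)%Z
    by move: XYhi; rewrite HX HY; lia.
  case: (Z_le_gt_dec (i + j + Z.of_nat (gg k s)) (Z.of_nat Q)) => // hgt.
  have := hi_aux HXY (g:=Z.of_nat (gg k s)) ltac:(lia) Dgt.
  rewrite /gg -/r /D /kZ.
  case: ifP => h1; last case: ifP => h2; move=> /= ?; lia.
apply/existsP; exists (fpt k d s (u, w)).
apply/andP; split.
  rewrite inE; apply/flatten_mapP; exists s; first by rewrite mem_iota; lia.
  by apply: map_f; apply: tri_mem.
have -> : fpt k d s (u, w) = rv d (X' + Y') Y'.
  rewrite /fpt /=.
  have -> : (Z.of_nat s + Z.of_nat (Dn k) * (Z.of_nat w - Z.of_nat (be k s)))%Z = Y'.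
    rewrite -/D HY /w Z2Nat.id //; lia.
  congr (rv d _ _).
  rewrite -/D HX /u Z2Nat.id //; lia.
apply: rv_within. rewrite /hnab. lia.
Qed.

Lemma Dn_pos k : 0 < Dn k.
Proof. rewrite /Dn; lia. Qed.

Lemma Dn_eq k : Dn k = 3 * k * k + 3 * k + 1.
Proof. rewrite /Dn; lia. Qed.

Lemma coprime_c1 k : coprime (Dn k) (3 * k + 1).
Proof.
rewrite /coprime; set g := gcdn _ _.
have h1 : g %| Dn k by apply: dvdn_gcdl.
have h2 : g %| 3 * k + 1 by apply: dvdn_gcdr.
have h3 : g %| Dn k - k * (3 * k + 1) by apply: dvdn_sub => //; apply: dvdn_mull.
have e3 : Dn k - k * (3 * k + 1) = 2 * k + 1 by rewrite Dn_eq; nia.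
rewrite e3 in h3.
have h4 : g %| 3 * (2 * k + 1) - 2 * (3 * k + 1) by apply: dvdn_sub; apply: dvdn_mull.
have e4 : 3 * (2 * k + 1) - 2 * (3 * k + 1) = 1 by lia.
by rewrite e4 dvdn1 in h4.
Qed.

Lemma coprime_c2 k : coprime (Dn k) (3 * k + 2).
Proof.
rewrite /coprime; set g := gcdn _ _.
have h1 : g %| Dn k by apply: dvdn_gcdl.
have h2 : g %| 3 * k + 2 by apply: dvdn_gcdr.
have h3 : g %| Dn k - k * (3 * k + 2) by apply: dvdn_sub => //; apply: dvdn_mull.
have e3 : Dn k - k * (3 * k + 2) = k + 1 by rewrite Dn_eq; nia.
rewrite e3 in h3.
have h4 : g %| 3 * (k + 1) - (3 * k + 2) by apply: dvdn_sub => //; apply: dvdn_mull.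
have e4 : 3 * (k + 1) - (3 * k + 2) = 1 by lia.
by rewrite e4 dvdn1 in h4.
Qed.

Lemma mulmod_inj {D c s t : nat} : coprime D c -> s < D -> t < D ->
  (c * s) %% D = (c * t) %% D -> s = t.
Proof.
move=> cop hs ht.
wlog le : s t hs ht / s <= t.
  move=> W; case: (leqP s t) => h; first exact: W.
  move=> e; symmetry; apply: (W t s ht hs); [lia | by rewrite e].
move=> e.
have : D %| c * t - c * s.
  by rewrite -eqn_mod_dvd ?leq_mul2l ?le ?orbT // e.
rewrite -mulnBr (Gauss_dvdr _ cop).
case: (posnP (t - s)) => h; first lia.
move=> /dvdn_leq => /(_ h); lia.
Qed.

Definition ordmod D (hD : 0 < D) (c : nat) (s : 'I_D) : 'I_D := Ordinal (ltn_pmod (c * s) hD).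

Lemma ordmod_inj D hD c : coprime D c -> injective (@ordmod D hD c).
Proof.
move=> cop s t /(congr1 val) /= e.
apply: val_inj; exact: (mulmod_inj cop (ltn_ord s) (ltn_ord t) e).
Qed.

Lemma rho_small k s : s <= k -> rho k s = (3 * k + 1) * s.
Proof.
move=> h; rewrite /rho modn_small // Dn_eq; nia.
Qed.

Lemma rho_mid k s : k < s <= 2 * k -> rho k s = (3 * k + 1) * s - Dn k.
Proof.
move=> h; rewrite /rho.
have e : (3 * k + 1) * s = 1 * Dn k + ((3 * k + 1) * s - Dn k) by rewrite Dn_eq; nia.
rewrite {1}e modnMDl modn_small // Dn_eq; nia.
Qed.

Lemma rho_top k t : 1 <= t <= k -> rho k (Dn k - t) = Dn k - (3 * k + 1) * t.
Proof.
move=> h; rewrite /rho.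
have e : (3 * k + 1) * (Dn k - t) = (3 * k) * Dn k + (Dn k - (3 * k + 1) * t).
  have : (3 * k + 1) * t <= Dn k by rewrite Dn_eq; nia.
  have : t <= Dn k by rewrite Dn_eq; nia.
  rewrite mulnBr; nia.
rewrite e modnMDl modn_small // Dn_eq; nia.
Qed.

Definition Aa k s : bool := Dn k + k < rho k s + s.
Definition Bb k s : bool := (0 < s) && (rho k s + s + k < Dn k).
Definition t2 k s : bool := [&& Aa k s, ~~ (Dn k <= rho k s + k) & ~~ (Dn k <= s + k)].

Lemma rho_lt k s : rho k s < Dn k.
Proof. rewrite /rho ltn_mod; exact: Dn_pos. Qed.

Lemma F1 k s : 0 < s -> s < Dn k -> k < rho k s + s.
Proof.
move=> h0 h1; case: (leqP s k) => h; last lia.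
rewrite rho_small //; nia.
Qed.

Lemma F_top k s : Dn k - k <= s -> s < Dn k -> rho k s + k < Dn k /\ Dn k + k < rho k s + s.
Proof.
move=> h0 h1.
have ek : k < Dn k by rewrite Dn_eq; nia.
have e : s = Dn k - (Dn k - s) by lia.
rewrite e rho_top; last lia.
set t := Dn k - s.
have ht : 1 <= t <= k by rewrite /t; lia.
have : (3 * k + 1) * t <= (3 * k + 1) * k by apply: leq_mul => //; lia.
have : (3 * k + 2) * t <= (3 * k + 2) * k by apply: leq_mul => //; lia.
rewrite Dn_eq; nia.
Qed.

Lemma F2 k s : 0 < s -> s < Dn k -> Dn k <= rho k s + k -> Aa k s /\ s + k < Dn k.
Proof.
move=> h0 h1 h2.
have ek : 2 * k < Dn k by rewrite Dn_eq; nia.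
case: (leqP s k) => hs.
  move: h2; rewrite rho_small //.
  have : (3 * k + 1) * s <= (3 * k + 1) * k by apply: leq_mul.
  rewrite Dn_eq; nia.
case: (leqP s (2 * k)) => hs2.
  move: h2; rewrite rho_mid; last lia.
  have : (3 * k + 1) * s <= (3 * k + 1) * (2 * k) by apply: leq_mul.
  rewrite Dn_eq; nia.
case: (leqP (Dn k - k) s) => hs3.
  have [] := F_top k s hs3 h1; lia.
rewrite /Aa; lia.
Qed.

Lemma rho0 k : rho k 0 = 0.
Proof. by rewrite /rho muln0 mod0n. Qed.

Lemma per_s k Q s : 1 <= k -> 1 <= Q -> s < Dn k ->
  Nn k Q s * (Nn k Q s).+1 + (2 * Q) * t2 k s <= Q * Q.+1 + (2 * Q + 2) * (s == 0).
Proof.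
move=> hk hQ hs.
have ek : k < Dn k by rewrite Dn_eq; nia.
case: (posnP s) => [->|s0].
  rewrite /Nn /t2 /al /be /gg /Aa rho0 !addn0 !add0n.
  have a1 : (Dn k <= k) = false by lia.
  have a2 : (Dn k + k < 0) = false by lia.
  have a3 : (k < 0) = false by lia.
  rewrite a1 a2 a3 /=; nia.
have hN : Nn k Q s <= Q /\ (t2 k s -> Nn k Q s < Q).
  have f1 := F1 k s s0 hs.
  rewrite /Nn /t2 /al /be /gg.
  case E1: (Dn k <= rho k s + k).
    have [hA hb] := F2 k s s0 hs E1. move: hA; rewrite /Aa => hA.
    rewrite hA /=. have -> : (Dn k <= s + k) = false by lia. simpl. lia.
  case E2: (Dn k <= s + k).
    have [hr hA] := F_top k s ltac:(lia) hs.
    rewrite hA /=. lia.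
  rewrite /Aa. case: (Dn k + k < rho k s + s) => /=.
    lia.
  have -> : k < rho k s + s by [].
  lia.
move: hN; case: (t2 k s) => /= [[h1 h2]|[h1 _]].
  have h3 := h2 isT.
  have : Nn k Q s * (Nn k Q s).+1 <= (Q - 1) * Q by apply: leq_mul; lia.
  nia.
have : Nn k Q s * (Nn k Q s).+1 <= Q * Q.+1 by apply: leq_mul; lia.
lia.
Qed.

Lemma sum_reindex_mod D (hD : 0 < D) c (F : nat -> nat) : coprime D c ->
  \sum_(s < D) F ((c * s) %% D) = \sum_(s < D) F s.
Proof.
move=> cop.
by rewrite [RHS](reindex_inj (ordmod_inj D hD c cop)).
Qed.

Lemma sum_top n m k : \sum_(i < n) (m <= i + k : nat) <= n + k - m.
Proof.
elim: n => [|n IH]; first by rewrite big_ord0.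
rewrite big_ord_recr.
apply: (leq_trans (leq_add IH (leqnn _))).
case: (leqP m (n + k)) => h /=; lia.
Qed.

Lemma sum_low n k : \sum_(i < n) ((0 < i) && (i <= k) : nat) <= minn n.-1 k.
Proof.
elim: n => [|n IH]; first by rewrite big_ord0.
rewrite big_ord_recr.
apply: (leq_trans (leq_add IH (leqnn _))).
case: (posnP n) => h.
  subst n => /=; lia.
case: (leqP n k) => h2 /=; lia.
Qed.

Lemma rho_ne0 k s : 0 < s -> s < Dn k -> 0 < rho k s.
Proof.
move=> h0 h1; case: (posnP (rho k s)) => // e.
have : (3 * k + 1) * s %% Dn k = (3 * k + 1) * 0 %% Dn k by rewrite muln0 mod0n; exact: e.
move/(mulmod_inj (coprime_c1 k) h1 (Dn_pos k)); lia.
Qed.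

Lemma rho_neg k s : 0 < s -> s < Dn k -> rho k (Dn k - s) = Dn k - rho k s.
Proof.
move=> h0 h1.
have [q [e he]] := rho_spec k s.
have r0 := rho_ne0 k s h0 h1.
have hq : q < 3 * k + 1.
  have : q * Dn k < (3 * k + 1) * Dn k.
    have : (3 * k + 1) * s < (3 * k + 1) * Dn k by rewrite ltn_pmul2l //; lia.
    lia.
  by rewrite ltn_pmul2r // Dn_pos.
rewrite /rho.
have e2 : (3 * k + 1) * (Dn k - s) = (3 * k - q) * Dn k + (Dn k - rho k s).
  rewrite mulnBr mulnBl. move: e; rewrite /rho => e.
  have : q * Dn k <= 3 * k * Dn k by rewrite leq_mul2r; lia.
  nia.
rewrite e2 modnMDl modn_small //; lia.
Qed.

Lemma sum_pos n : \sum_(i < n) (0 < i : nat) = n.-1.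
Proof.
elim: n => [|n IH]; first by rewrite big_ord0.
rewrite big_ord_recr IH /=.
case: n {IH} => //= n; lia.
Qed.

Definition Cc k s : bool := [&& 0 < s, ~~ Aa k s & ~~ Bb k s].
Definition tau k s := ((3 * k + 2) * s) %% Dn k.

Lemma tau_spec k s : tau k s = (rho k s + s) %% Dn k.
Proof.
have [q [e _]] := rho_spec k s.
rewrite /tau (_ : (3 * k + 2) * s = q * Dn k + (rho k s + s)); last by lia.
by rewrite modnMDl.
Qed.

Lemma C_bound k s : 1 <= k -> s < Dn k ->
  (Cc k s : nat) <= (Dn k <= tau k s + k) + ((0 < tau k s) && (tau k s <= k)).
Proof.
move=> hk hs.
rewrite /Cc /Aa /Bb.
case: (posnP s) => [->|s0] //=.
case h1: (Dn k + k < rho k s + s) => //=.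
case h2: (rho k s + s + k < Dn k) => //=.
have ek : k < Dn k by rewrite Dn_eq; nia.
have rl := rho_lt k s.
rewrite tau_spec.
case: (ltnP (rho k s + s) (Dn k)) => h3.
  rewrite modn_small //; lia.
have e : rho k s + s = 1 * Dn k + (rho k s + s - Dn k) by lia.
rewrite e modnMDl modn_small; last by lia.
case: (posnP (rho k s + s - Dn k)) => h4; last by lia.
exfalso.
have : tau k s = (3 * k + 2) * 0 %% Dn k by rewrite tau_spec e modnMDl h4 muln0 mod0n.
move/(mulmod_inj (coprime_c2 k) hs (Dn_pos k)); lia.
Qed.

Lemma negmod_lt D (hD : 0 < D) (s : nat) : (D - s) %% D < D.
Proof. exact: ltn_pmod. Qed.

Definition negord D (hD : 0 < D) (s : 'I_D) : 'I_D := Ordinal (negmod_lt D hD s).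

Lemma negmod_val D s : 0 < s -> s < D -> (D - s) %% D = D - s.
Proof. move=> h0 h1; rewrite modn_small //; lia. Qed.

Lemma negord_inj D hD : injective (@negord D hD).
Proof.
move=> s t /(congr1 val) /=.
have hs := ltn_ord s; have ht := ltn_ord t.
case: (posnP s) => s0; case: (posnP t) => t0.
- by move=> _; apply: ord_inj; lia.
- rewrite s0 subn0 modnn negmod_val // => e; exfalso; lia.
- rewrite t0 subn0 modnn negmod_val // => e; exfalso; lia.
- rewrite !negmod_val // => e; apply: ord_inj; lia.
Qed.

Lemma cA_cB k : \sum_(s < Dn k) (Aa k s : nat) = \sum_(s < Dn k) (Bb k s : nat).
Proof.
rewrite (reindex_inj (negord_inj _ (Dn_pos k))).
apply: eq_bigr => s _ /=.
have hs := ltn_ord s.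
case: (posnP s) => s0.
  rewrite s0 subn0 modnn /Aa /Bb rho0.
  have -> : (Dn k + k < 0 + 0) = false by lia.
  by [].
rewrite negmod_val // /Aa /Bb rho_neg // s0 /=.
have := rho_lt k s; lia.
Qed.

Lemma count_t2 k : 1 <= k -> 3 * k * k <= (\sum_(s < Dn k) (t2 k s : nat)).*2 + 3 * k.
Proof.
move=> hk.
have hD := Dn_pos k.
have ek : k < Dn k by rewrite Dn_eq; nia.
have h1 : \sum_(s < Dn k) (Aa k s : nat) + \sum_(s < Dn k) (Bb k s : nat)
          + \sum_(s < Dn k) (Cc k s : nat) = (Dn k).-1.
  rewrite -!big_split -sum_pos /=.
  apply: eq_bigr => s _.
  rewrite /Cc /Aa /Bb.
  case: (posnP s) => [->|s0] /=.
    by rewrite rho0.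
  case h1: (Dn k + k < rho k s + s) => /=; case h2: (rho k s + s + k < Dn k) => //=.
  lia.
have h2 := cA_cB k.
have h3 : \sum_(s < Dn k) (Cc k s : nat) <= 2 * k.
  apply: (@leq_trans (\sum_(s < Dn k) ((Dn k <= tau k s + k) + ((0 < tau k s) && (tau k s <= k)) : nat))).
    by apply: leq_sum => s _; apply: C_bound.
  rewrite big_split /=.
  rewrite /tau (sum_reindex_mod _ hD _ (fun x => (Dn k <= x + k : nat)) (coprime_c2 k)).
  rewrite (sum_reindex_mod _ hD _ (fun x => ((0 < x) && (x <= k) : nat)) (coprime_c2 k)).
  have := sum_top (Dn k) (Dn k) k.
  have := sum_low (Dn k) k.
  lia.
have h4 : \sum_(s < Dn k) (Aa k s : nat) <= \sum_(s < Dn k) (t2 k s : nat)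
    + \sum_(s < Dn k) (Dn k <= rho k s + k : nat) + \sum_(s < Dn k) (Dn k <= s + k : nat).
  rewrite -!big_split; apply: leq_sum => s _ /=.
  rewrite /t2. case: (Aa k s); case: (Dn k <= rho k s + k); case: (Dn k <= s + k) => //.
have h5 : \sum_(s < Dn k) (Dn k <= rho k s + k : nat) <= k.
  rewrite /rho (sum_reindex_mod _ hD _ (fun x => (Dn k <= x + k : nat)) (coprime_c1 k)).
  have := sum_top (Dn k) (Dn k) k. lia.
have h6 : \sum_(s < Dn k) (Dn k <= s + k : nat) <= k.
  have := sum_top (Dn k) (Dn k) k. lia.
move: h1 h2 h3 h4 h5 h6; rewrite Dn_eq; lia.
Qed.

Lemma sum_eq0 n : \sum_(i < n) ((i : nat) == 0 : nat) = (0 < n).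
Proof.
elim: n => [|n IH]; first by rewrite big_ord0.
rewrite big_ord_recr IH /=.
case: n {IH} => //=.
Qed.

Lemma size_Dseq k Q d : (size (Dseq k Q d)).*2 = \sum_(s < Dn k) Nn k Q s * (Nn k Q s).+1.
Proof.
rewrite /Dseq size_flatten /shape -map_comp.
rewrite -(big_mkord xpredT (fun s => Nn k Q s * (Nn k Q s).+1)) /index_iota subn0.
elim: (iota 0 (Dn k)) => [|x l IH]; first by rewrite big_nil.
by rewrite big_cons /= doubleD IH size_map tri_size.
Qed.

Lemma sum_bound k Q : 1 <= k -> 1 <= Q ->
  \sum_(s < Dn k) Nn k Q s * (Nn k Q s).+1 <= Dn k * Q ^ 2 + (6 * k + 3) * Q + 2.
Proof.
move=> hk hQ.
have h1 : \sum_(s < Dn k) Nn k Q s * (Nn k Q s).+1 + 2 * Q * \sum_(s < Dn k) (t2 k s : nat)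
    <= Dn k * (Q * Q.+1) + (2 * Q + 2).
  rewrite big_distrr -big_split /=.
  apply: (@leq_trans (\sum_(s < Dn k) (Q * Q.+1 + (2 * Q + 2) * ((s : nat) == 0)))).
    by apply: leq_sum => s _; apply: per_s.
  rewrite big_split /= sum_nat_const card_ord.
  rewrite -(big_distrr (2 * Q + 2) xpredT (fun i : 'I_(Dn k) => ((i : nat) == 0 : nat))) /= sum_eq0 Dn_pos.
  lia.
have h2 := count_t2 k hk.
have h3 : Q * (3 * k * k) <= Q * ((\sum_(s < Dn k) (t2 k s : nat)).*2 + 3 * k)
  by rewrite leq_mul2l h2 orbT.
move: h1 h3; rewrite Dn_eq.
set S := \sum_(s < _) _ * _.
set T := \sum_(s < _) _.
nia.
Qed.

Lemma setT_dom k d : dominating k [set: vtx d].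
Proof.
apply/forallP => v; apply/existsP; exists v; rewrite inE /=.
apply: within_of. rewrite /hd /hnab. lia.
Qed.

Lemma gamma_le k d (S : {set vtx d}) : dominating k S -> gamma k d <= #|S|.
Proof.
move=> hS; rewrite /gamma.
case: arg_minnP; first exact: setT_dom.
move=> D _ hmin; exact: hmin.
Qed.

Lemma main k Q d : 1 <= k -> 1 <= Q -> d <= Dn k * Q ->
  2 * gamma k d <= Dn k * Q ^ 2 + (6 * k + 3) * Q + 2.
Proof.
move=> hk hQ hd.
have g := gamma_le _ _ _ (dominating_D k Q d hk hQ hd).
have c : #|[set x in Dseq k Q d]| <= size (Dseq k Q d) by rewrite cardsE card_size.
have s := size_Dseq k Q d. rewrite -mul2n in s.
have b := sum_bound k Q hk hQ.
apply: leq_trans b. rewrite -s leq_mul2l /=. exact: leq_trans g c.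
Qed.

Theorem theorem1 (k q beta : nat) :
  (1 <= k)%N -> (1 <= q)%N -> (beta <= (3 * k ^ 2 + 3 * k + 1) - 1)%N ->
  let Dk := (3 * k ^ 2 + 3 * k + 1)%N in
  let d := (Dk * q + beta)%N in
  (2 * gamma k d <=
     (if beta == 0 then Dk * q ^ 2 + (6 * k + 3) * q + 2
      else Dk * (q + 1) ^ 2 + (6 * k + 3) * (q + 1) + 2))%N.
Proof.
move=> hk hq hb.
rewrite /=.
case: (eqVneq beta 0) => hb0.
  rewrite hb0 /=. apply: (main k q) => //. rewrite /Dn; lia.
apply: (main k (q + 1)) => //; first lia.
rewrite /Dn; rewrite /Dn in hb. nia.
Qed.
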